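(* Let $m\ge0$, $n\ge1$, and let $\lambda\in Q_4(m,n)$ have $m$-Durfee rectangle symbol $(\alpha,\beta)_{(m+j)\times j}$ with $s=\ell(\alpha)$, $t=\ell(\beta)$. Then there exists an integer $k$ with $1\le k\le s$ such that $\alpha_{k+1}\le\beta_k-1$ and $\alpha_k\ge\beta_{k+1}-1$.
   Context: Partitions: $\lambda_1\ge\cdots\ge\lambda_\ell>0$, $\ell(\lambda)=\ell$, $\lambda_i=0$ for $i>\ell$ (in particular $\alpha_{s+1}=0$), $s(\lambda)$ the smallest part with $s(\emptyset)=+\infty$. Rank-set of $\lambda$ $=[-\lambda_1,1-\lambda_2,\dots,\ell-1-\lambda_\ell,\ell,\ell+1,\dots]$. $Q(m,n)$: partitions of $n$ whose rank-set contains $m$. $m$-Durfee rectangle symbol $(\alpha,\beta)_{(m+j)\times j}$ of $\lambda$: $j\ge0$ is the largest integer with $\lambda_{m+j}\ge j$; $\alpha$ is the conjugate of $(\lambda_1-j,\dots,\lambda_{m+j}-j)$ and $\beta=(\lambda_{m+j+1},\lambda_{m+j+2},\dots)$. $Q_4(m,n)$ is the set of $\lambda\in Q(m,n)$ whose symbol has $j\ge1$, $\beta_1=j$, $\ell(\beta)-\ell(\alpha)\ge1$, $\alpha_1=m+j>\alpha_2$ and $s(\beta)\ge2$. (For $\lambda\in Q(m,n)$ with $j\ge1$ one always has $\beta_1=j$.) *)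

(* Defs.v *)
From mathcomp Require Import all_boot.
Set Implicit Arguments. Unset Strict Implicit. Unset Printing Implicit Defensive.

(* A partition is a finite nonincreasing sequence of positive naturals
   [:: λ_1; ...; λ_ℓ]; λ_i (1-indexed) is [nth 0 l i.-1], so λ_i = 0 for i > ℓ. *)
Definition is_partition (l : seq nat) : bool :=
  sorted geq l && all (fun x => 0 < x) l.

Definition part (l : seq nat) (i : nat) : nat := if i is i'.+1 then nth 0 l i' else 0.

(* m (>= 0) belongs to the rank-set [-λ_1, 1-λ_2, ..., ℓ-1-λ_ℓ, ℓ, ℓ+1, ...]:
   either m >= ℓ, or m = (i-1) - λ_i for some 1 <= i <= ℓ
   (written with 0-based index r = i-1 as  r = λ_{r+1} + m). *)
Definition in_rankset (m : nat) (l : seq nat) : bool :=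
  (size l <= m) || has (fun r => r == nth 0 l r + m) (iota 0 (size l)).

Definition inQ (m n : nat) (l : seq nat) : bool :=
  [&& is_partition l, sumn l == n & in_rankset m l].

(* j of the m-Durfee rectangle: the largest j >= 0 with λ_{m+j} >= j
   (j = 0 always qualifies; any j >= 1 qualifying has j <= m+j <= ℓ). *)
Definition durfee_j (m : nat) (l : seq nat) : nat :=
  \max_(j < (size l).+1 | (j == 0 :> nat) || (j <= part l (m + j))) j.

Definition conjugate (mu : seq nat) : seq nat :=
  mkseq (fun i => count (fun x => i < x) mu) (\max_(x <- mu) x).

Definition dalpha (m : nat) (l : seq nat) : seq nat :=
  let j := durfee_j m l in conjugate (map (fun x => x - j) (take (m + j) l)).

Definition dbeta (m : nat) (l : seq nat) : seq nat :=
  drop (m + durfee_j m l) l.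

(* Q_4(m,n): j >= 1, β_1 = j, ℓ(β) - ℓ(α) >= 1, α_1 = m + j > α_2, s(β) >= 2
   (s(β) >= 2 means every part of β is >= 2, with s(∅) = +∞). *)
Definition inQ4 (m n : nat) (l : seq nat) : bool :=
  let j := durfee_j m l in
  let a := dalpha m l in
  let b := dbeta m l in
  [&& inQ m n l, 1 <= j, part b 1 == j, size a < size b,
      part a 1 == m + j, part a 2 < m + j
    & all (fun x => 2 <= x) b].

(* Main.v *)
Require Import Defs.
From mathcomp Require Import all_boot.
From mathcomp Require Import zify.

Lemma nth_sorted_geq (s : seq nat) i j :
  sorted geq s -> i <= j -> nth 0 s j <= nth 0 s i.
Proof.
move=> ss ij; case: (ltnP j (size s)) => hj; last by rewrite nth_default.
have hi : i < size s by apply: leq_ltn_trans hj.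
have tr : transitive geq by move=> a b c /= h1 h2; apply: leq_trans h2 h1.
have rf : reflexive geq by move=> a /=.
by apply: (sorted_leq_nth tr rf 0 ss) => //; rewrite inE.
Qed.

Lemma part_mono (s : seq nat) i j :
  sorted geq s -> 1 <= i -> i <= j -> part s j <= part s i.
Proof.
move=> ss; case: i => // i _; case: j => // j ij.
by apply: nth_sorted_geq.
Qed.

Theorem proposition4p4 (m n : nat) (l : seq nat) :
  1 <= n -> inQ4 m n l ->
  exists k : nat,
    [/\ 1 <= k, k <= size (dalpha m l),
        part (dalpha m l) k.+1 + 1 <= part (dbeta m l) k
      & part (dbeta m l) k.+1 <= part (dalpha m l) k + 1].
Proof.
rewrite /inQ4 /=; move=> _ /and5P [/and3P [/andP [sl _] _ _] j1 /eqP b1 st /and3P [/eqP a1 _ ball]].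
set a := dalpha m l in st a1 *; set b := dbeta m l in b1 st ball *.
set j := durfee_j m l in j1 b1 a1.
have sb : sorted geq b by rewrite /b /dbeta; exact: drop_sorted.
have s1 : 1 <= size a.
  case: (size a =P 0) => [/size0nil E|/eqP]; last by rewrite lt0n.
  by move: a1; rewrite E /=; lia.
have As : part a (size a).+1 + 1 <= part b (size a).
  rewrite /= nth_default // add0n.
  case: (size a) st s1 => // s' st _ /=.
  have : nth 0 b s' \in b by apply: mem_nth; exact: ltn_trans (ltnSn s') st.
  by move/(allP ball) => /= h; lia.
pose P k := (1 <= k) && (part a k.+1 + 1 <= part b k).
have exP : exists k, P k by exists (size a); rewrite /P s1 As.
case: (ex_minnP exP) => k /andP [k1 Ak] kmin.
have ks : k <= size a by apply: kmin; rewrite /P s1 As.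
exists k; split => //.
case: k k1 Ak kmin ks => // [] [|k'] _ Ak kmin ks.
- have := @part_mono b 1 2 sb erefl erefl.
  move: a1 b1 => /= a1 b1; rewrite /part; lia.
- have nP : ~~ P k'.+1.
    apply/negP => /kmin; lia.
  have nA : ~~ (part a k'.+2 + 1 <= part b k'.+1) by move: nP; rewrite /P.
  have := @part_mono b k'.+1 k'.+3 sb erefl (leq_trans (leqnSn _) (leqnSn _)).
  move: nA; rewrite -ltnNge => nA mono; apply: leq_trans mono _; exact: ltnW nA.
Qed.
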